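(* Let $p\colon X\to B$ be a Boolean set. For an ultrafilter $F$ of $B$ and $a\in X$ with $p(a)\in F$, let $[a]_F$ be the set of $b\in X$ with $p(b)\in F$ for which there exists $c\in X$ with $p(c)\in F$ and $c\le a$, $c\le b$. Then: for every ultrafilter $F$ of $B$ and every $a$ with $p(a)\in F$, the set $[a]_F$ is an ultrafilter of $(X,\le)$; every ultrafilter of $(X,\le)$ is of the form $[a]_F$ for some ultrafilter $F$ of $B$ and some $a$ with $p(a)\in F$; and $[a]_F\cap[b]_F\neq\emptyset$ implies $[a]_F=[b]_F$.
   Context: Convention: a ''Boolean algebra'' means a generalized Boolean algebra (relatively complemented distributive lattice with $0$). Presheaf of sets over a meet semilattice $E$: pairwise disjoint sets $X_e$, restriction maps $x\mapsto x|^e_f$ for $e\ge f$ with $|^e_e=\mathrm{id}$ and $(x|^e_f)|^f_g=x|^e_g$; $p(x)=e$ iff $x\in X_e$; global support: all $X_e\neq\emptyset$. Order: $x\le y$ iff $p(x)\le p(y)$ and $x=y|^{p(y)}_{p(x)}$. Compatibility $x\sim y$: $x\wedge y$ exists and $p(x\wedge y)=p(x)\wedge p(y)$. A Boolean set is a presheaf $p\colon X\to B$ with global support over a Boolean algebra $B$ such that $(X,\le)$ has least element $0$, compatible pairs have joins, and $p(x)=0\Rightarrow x=0$. In a poset, a filter is a non-empty, down directed, upwardly closed subset; proper if not the whole poset; an ultrafilter is a maximal proper filter. *)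

(* Defs.v *)
From HB Require Import structures.
From mathcomp Require Import all_boot all_order.
Set Implicit Arguments. Unset Strict Implicit. Unset Printing Implicit Defensive.
Import Order.TTheory.
Local Open Scope order_scope.

(* A "Boolean algebra" in the paper's sense (generalized Boolean algebra:
   relatively complemented distributive lattice with 0) is a
   [cbDistrLatticeType d] in MathComp. *)

Section PosetNotions.
Variables (T : Type) (le : T -> T -> Prop).

Definition is_filter (S : T -> Prop) : Prop :=
  (exists x, S x) /\
  (forall x y, S x -> S y -> exists z, S z /\ le z x /\ le z y) /\
  (forall x y, S x -> le x y -> S y).

Definition is_proper (S : T -> Prop) : Prop := exists x, ~ S x.

Definition is_ultrafilter (S : T -> Prop) : Prop :=
  is_filter S /\ is_proper S /\
  (forall G : T -> Prop, is_filter G -> is_proper G ->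
     (forall x, S x -> G x) -> forall x, G x <-> S x).

Definition is_glb (x y m : T) : Prop :=
  le m x /\ le m y /\ forall z, le z x -> le z y -> le z m.

Definition is_lub (x y j : T) : Prop :=
  le x j /\ le y j /\ forall z, le x z -> le y z -> le j z.

Definition is_least (z : T) : Prop := forall x, le z x.
End PosetNotions.

(** A presheaf of sets with global support over a meet semilattice [B]:
    the disjoint family (X_e)_e is encoded as one type [X] with the
    projection [p] (x \in X_e iff p x = e); [res x f] is x|^{p x}_f,
    only specified when f <= p x. *)
Record presheaf d (B : cbDistrLatticeType d) (X : Type) := Presheaf {
  p : X -> B;
  res : X -> B -> X;
  res_p : forall x f, f <= p x -> p (res x f) = f;
  res_id : forall x, res x (p x) = x;
  res_comp : forall x f g, g <= f -> f <= p x -> res (res x f) g = res x g;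
  global_support : forall e : B, exists x, p x = e
}.

Section PresheafNotions.
Variables (d : Order.disp_t) (B : cbDistrLatticeType d) (X : Type)
  (P : presheaf B X).

Definition leX (x y : X) : Prop :=
  p P x <= p P y /\ x = res P y (p P x).

Definition compatible (x y : X) : Prop :=
  exists m, is_glb leX x y m /\ p P m = p P x `&` p P y.

Definition is_boolean_set : Prop :=
  exists z : X, is_least leX z /\
    (forall x y, compatible x y -> exists j, is_lub leX x y j) /\
    (forall x, p P x = \bot -> x = z).

Definition cls (F : B -> Prop) (a : X) : X -> Prop :=
  fun b => F (p P b) /\ exists c, F (p P c) /\ leX c a /\ leX c b.
End PresheafNotions.

(* Main.v *)
Require Import Defs.
From HB Require Import structures.
From mathcomp Require Import all_boot all_order.
From Stdlib Require Import Classical.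
Local Open Scope order_scope.
Import Order.TTheory.
Set Implicit Arguments. Unset Strict Implicit.

Section S.
Variables (d : Order.disp_t) (B : cbDistrLatticeType d) (X : Type) (P : presheaf B X).

Lemma leX_refl x : leX P x x.
Proof. by split; [exact: lexx | rewrite res_id]. Qed.

Lemma leX_p x y : leX P x y -> p P x <= p P y.
Proof. by case. Qed.

Lemma leX_trans x y z : leX P x y -> leX P y z -> leX P x z.
Proof.
move=> [hxy ex] [hyz ey]; split; first exact: le_trans hxy hyz.
transitivity (res P y (p P x)) => //.
by rewrite ey res_comp.
Qed.

Lemma leX_res v g : g <= p P v -> leX P (res P v g) v.
Proof. by move=> h; split; rewrite res_p. Qed.

Lemma res_le c v g : leX P c v -> g <= p P c -> res P c g = res P v g.
Proof. move=> [hcv ec] hg. by rewrite ec res_comp. Qed.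

Lemma le_same w c a : leX P w a -> leX P c a -> p P w <= p P c -> leX P w c.
Proof. move=> [hwa ew] hca h; split => //. by rewrite (res_le hca h). Qed.

Lemma res_mono v g g' : g <= g' -> g' <= p P v -> leX P (res P v g) (res P v g').
Proof.
move=> h h'. have -> : res P v g = res P (res P v g') g by rewrite res_comp.
by apply: leX_res; rewrite res_p.
Qed.

Lemma filter_notbot (F : B -> Prop) :
  is_filter (fun e f : B => e <= f) F -> is_proper F -> ~ F \bot.
Proof. move=> [_ [_ up]] [x nx] Fb; apply: nx; apply: (up _ _ Fb); exact: le0x. Qed.

Lemma uf_sep (F : B -> Prop) e : is_ultrafilter (fun e f : B => e <= f) F -> ~ F e ->
  exists f, F f /\ f `&` e = \bot.
Proof.
move=> [[[x0 Fx0] [dir up]] [prop max]] nFe.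
pose G y := exists f, F f /\ f `&` e <= y.
have HG : is_filter (fun e f : B => e <= f) G.
  split; first by exists (x0 `&` e), x0.
  split.
  - move=> y1 y2 [f1 [F1 h1]] [f2 [F2 h2]].
    have [z [Fz [z1 z2]]] := dir _ _ F1 F2.
    exists (z `&` e); split; first by exists z.
    split.
    + apply: le_trans h1; rewrite lexI leIr andbT; exact: le_trans (leIl _ _) z1.
    + apply: le_trans h2; rewrite lexI leIr andbT; exact: le_trans (leIl _ _) z2.
  - move=> y1 y2 [f [Ff h]] hy; exists f; split=> //; exact: le_trans h hy.
case: (classic (is_proper G)) => [PG|NPG].
  have sub : forall x, F x -> G x by move=> x Fx; exists x; split=> //; exact: leIl.
  have := max G HG PG sub e => [[h _]]; exfalso; apply: nFe; apply: h.
  by exists x0; split => //; exact: leIr.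
have : G \bot by apply: NNPP => nG; apply: NPG; exists \bot.
move=> [f [Ff hf]]; exists f; split => //; apply/eqP; by rewrite -lex0.
Qed.

Lemma cls_res (F : B -> Prop) a g : F g -> g <= p P a -> cls P F a (res P a g).
Proof.
move=> Fg ga; have hp := res_p ga.
split; first by rewrite hp.
exists (res P a g); rewrite hp; split => //; split; [exact: leX_res | exact: leX_refl].
Qed.

Variables (z : X) (zleast : forall x, leX P z x) (zbot : forall x, p P x = \bot -> x = z).

Lemma pz : p P z = \bot.
Proof.
have [x px] := global_support P \bot.
apply/eqP; rewrite -lex0 -px; exact: leX_p (zleast x).
Qed.

Lemma part1 (F : B -> Prop) a : is_ultrafilter (fun e f : B => e <= f) F -> F (p P a) ->
  is_ultrafilter (leX P) (cls P F a).
Proof.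
move=> UF Fa. have UF' := UF. case: UF' => [[[x0 Fx0] [dir up]] [prop max]].
have nb : ~ F \bot by apply: filter_notbot => //; split; [exists x0 | split].
have HC : is_filter (leX P) (cls P F a).
  split; first by exists a; split=> //; exists a; split=> //; split; apply: leX_refl.
  split.
  - move=> b1 b2 [Fb1 [c1 [Fc1 [c1a c1b]]]] [Fb2 [c2 [Fc2 [c2a c2b]]]].
    have [g [Fg [g1 g2]]] := dir _ _ Fc1 Fc2.
    have gpa : g <= p P a := le_trans g1 (leX_p c1a).
    have ra := leX_res gpa.
    have hpg : p P (res P a g) = g := res_p gpa.
    exists (res P a g); split; first exact: cls_res.
    split.
    + apply: leX_trans c1b; apply: le_same ra c1a _; by rewrite hpg.
    + apply: leX_trans c2b; apply: le_same ra c2a _; by rewrite hpg.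
  - move=> x y [Fx [c [Fc [ca cx]]]] xy; split; first exact: up Fx (leX_p xy).
    exists c; split=> //; split=> //; exact: leX_trans cx xy.
split=> //. split.
  exists z => -[Fz _]; apply: nb; by rewrite -pz.
move=> G HG PG sub x; split; last exact: sub.
move=> Gx.
have nbG : ~ G z.
  case: PG => y ny Gz; apply: ny; case: HG => [_ [_ upG]]; exact: upG Gz (zleast y).
case: HG => [_ [dirG upG]].
have Ga : G a by apply: sub; split=> //; exists a; split=> //; split; apply: leX_refl.
have [w [Gw [wx wa]]] := dirG _ _ Gx Ga.
suff Fw : F (p P w).
  split; first exact: up Fw (leX_p wx). by exists w.
apply: NNPP => nFw.
have [f [Ff hf]] := uf_sep UF nFw.
have [g [Fg [gf ga]]] := dir _ _ Ff Fa.
have Gc := sub _ (cls_res Fg ga).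
have [v [Gv [vc vw]]] := dirG _ _ Gc Gw.
have pv : p P v = \bot.
  apply/eqP; rewrite -lex0 -hf lexI; apply/andP; split.
  - apply: le_trans (leX_p vc) _; rewrite res_p //; exact: le_trans gf _.
  - exact: leX_p vw.
by apply: nbG; rewrite -(zbot pv).
Qed.

Lemma part3 (F : B -> Prop) a b : is_filter (fun e f : B => e <= f) F ->
  (exists x, cls P F a x /\ cls P F b x) -> forall y, cls P F a y -> cls P F b y.
Proof.
move=> [_ [dir up]] [x [[_ [c1 [Fc1 [c1a c1x]]]] [_ [c2 [Fc2 [c2b c2x]]]]]]
  y [Fy [c [Fc [ca cy]]]].
have [g [Fg [g1 gc]]] := dir _ _ Fc1 Fc.
have [h [Fh [hg h2]]] := dir _ _ Fg Fc2.
have hc1 : h <= p P c1 := le_trans hg g1.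
have hc : h <= p P c := le_trans hg gc.
split => //; exists (res P c2 h); rewrite res_p //; split => //; split.
  exact: leX_trans (leX_res h2) c2b.
have -> : res P c2 h = res P c h.
  by rewrite (res_le c2x h2) -(res_le c1x hc1) (res_le c1a hc1) -(res_le ca hc).
exact: leX_trans (leX_res hc) cy.
Qed.

Lemma part2 (U : X -> Prop) : is_ultrafilter (leX P) U ->
     exists (F : B -> Prop) (a : X),
       is_ultrafilter (fun e f : B => e <= f) F /\ F (p P a) /\
       (forall x, U x <-> cls P F a x).
Proof.
move=> [[[a Ua] [dirU upU]] [[y0 ny0] maxU]].
pose F e := exists u, U u /\ p P u <= e.
have U0 : ~ U z := fun Uz => ny0 (upU _ _ Uz (zleast y0)).
have Fa : F (p P a) by exists a; split.
have HF : is_filter (fun e f : B => e <= f) F.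
  split; first by exists (p P a).
  split.
  - move=> e1 e2 [u1 [U1 h1]] [u2 [U2 h2]].
    have [u [Uu [uu1 uu2]]] := dirU _ _ U1 U2.
    exists (p P u); split; first by exists u.
    split; [exact: le_trans (leX_p uu1) h1 | exact: le_trans (leX_p uu2) h2].
  - move=> e1 e2 [u [Uu h]] h'; exists u; split=>//; exact: le_trans h h'.
have Fnb : ~ F \bot.
  move=> [u [Uu hu]].
  have pu : p P u = \bot by apply/eqP; rewrite -lex0.
  by apply: U0; rewrite -(zbot pu).
exists F, a. split; last split.
- split=> //. split; first by exists \bot.
  move=> G HG PG sub e; split; last exact: sub.
  move=> Ge.
  have nbG := filter_notbot HG PG.
  case: HG => [_ [dirG upG]].
  pose U' y := exists u g, U u /\ G g /\ g <= p P u /\ leX P (res P u g) y.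
  have HU' : is_filter (leX P) U'.
    split.
      exists a, a, (p P a); split=> //; split; first exact: sub.
      split => //; rewrite res_id; exact: leX_refl.
    split.
    + move=> y1 y2 [u1 [g1 [U1 [G1 [g1u r1]]]]] [u2 [g2 [U2 [G2 [g2u r2]]]]].
      have [u [Uu [uu1 uu2]]] := dirU _ _ U1 U2.
      have Gpu : G (p P u) by apply: sub; exists u; split.
      have [g3 [G3 [g31 g32]]] := dirG _ _ G1 G2.
      have [g [Gg [gg3 gu]]] := dirG _ _ G3 Gpu.
      exists (res P u g). split; first by exists u, g; do 3!split=>//; exact: leX_refl.
      split.
      * rewrite (res_le uu1 gu); apply: leX_trans (res_mono _ g1u) r1.
        exact: le_trans gg3 g31.
      * rewrite (res_le uu2 gu); apply: leX_trans (res_mono _ g2u) r2.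
        exact: le_trans gg3 g32.
    + move=> y1 y2 [u [g [Uu [Gg [gu r]]]]] h; exists u, g; do 3!split=>//.
      exact: leX_trans r h.
  have PU' : is_proper U'.
    exists z => -[u [g [Uu [Gg [gu r]]]]].
    have : g <= \bot by rewrite -pz -(res_p gu); exact: leX_p r.
    rewrite lex0 => /eqP gb; apply: nbG; by rewrite -gb.
  have sub' : forall y, U y -> U' y.
    move=> y Uy; exists y, (p P y); split=>//; split; first by apply: sub; exists y.
    split => //; rewrite res_id; exact: leX_refl.
  have eq := maxU U' HU' PU' sub'.
  have [g [Gg [ge ga]]] := dirG _ _ Ge (sub _ Fa).
  have Ur : U (res P a g).
    by apply/eq; exists a, g; do 3!split=>//; exact: leX_refl.
  exists (res P a g); split=>//; by rewrite res_p.
- done.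
- move=> x; split.
  + move=> Ux; split; first by exists x.
    have [c [Uc [ca cx]]] := dirU _ _ Ua Ux.
    exists c; split; [by exists c | split=>//].
  + move=> [Fx [c [[u [Uu hu]] [ca cx]]]].
    have [v [Uv [vu va]]] := dirU _ _ Uu Ua.
    have vc : leX P v c := le_same va ca (le_trans (leX_p vu) hu).
    exact: upU _ _ (upU _ _ Uv vc) cx.
Qed.

End S.

Theorem proposition3p6 (d : Order.disp_t) (B : cbDistrLatticeType d) (X : Type)
  (P : presheaf B X) (HB : is_boolean_set P) :
  (forall F : B -> Prop, is_ultrafilter (fun e f : B => e <= f) F ->
     forall a : X, F (p P a) -> is_ultrafilter (leX P) (cls P F a)) /\
  (forall U : X -> Prop, is_ultrafilter (leX P) U ->
     exists (F : B -> Prop) (a : X),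
       is_ultrafilter (fun e f : B => e <= f) F /\ F (p P a) /\
       (forall x, U x <-> cls P F a x)) /\
  (forall F : B -> Prop, is_ultrafilter (fun e f : B => e <= f) F ->
     forall a b : X, F (p P a) -> F (p P b) ->
       (exists x, cls P F a x /\ cls P F b x) ->
       forall x, cls P F a x <-> cls P F b x).
Proof.
case: HB => z [zl [_ zbot]].
have zleast : forall x, leX P z x := zl.
split. move=> F UF a Fa. exact (part1 zleast zbot UF Fa).
split; first by move=> U UU; exact (part2 zleast zbot UU).
move=> F [HF _] a b _ _ [x [xa xb]] y; split.
  exact (part3 HF (ex_intro _ x (conj xa xb)) (y:=y)).
exact (part3 HF (ex_intro _ x (conj xb xa)) (y:=y)).
Qed.
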